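(* Let $A=(a_{nk})$ be a nonnegative regular summability matrix and let $(q_n)_{n\in\mathbb{N}}$ be a sequence with $0<q_n<1$ for all $n$, $st_A\text{-}\lim_n q_n^{\,n}=1$ and $st_A\text{-}\lim_n \frac{1}{[n]_{q_n}}=0$. Then for every continuous $f:[0,1]\to\mathbb{R}_+$, $$st_A\text{-}\lim_n\left(\sup_{x\in[0,1]}\left|B^{(M)}_{n,q_n}(f)(x)-f(x)\right|\right)=0.$$
   Context: For $q\in(0,1)$ and a nonnegative integer $m$, $[m]_q=\frac{1-q^m}{1-q}$; $[m]_q!=[m]_q[m-1]_q\cdots[1]_q$ for $m\ge1$, $[0]_q!=1$; $\left[\begin{smallmatrix} n\\ k\end{smallmatrix}\right]_q=\frac{[n]_q!}{[k]_q![n-k]_q!}$. For $x\in[0,1]$, $p_{n,k}(x;q)=\left[\begin{smallmatrix} n\\ k\end{smallmatrix}\right]_q x^k\prod_{s=0}^{n-k-1}(1-q^s x)$, and $$B^{(M)}_{n,q}(f)(x)=\frac{\bigvee_{k=0}^{n}p_{n,k}(x;q)\,f\!\left(\frac{[k]_q}{[n]_q}\right)}{\bigvee_{k=0}^{n}p_{n,k}(x;q)},$$ with $\bigvee$ the maximum. A matrix $A=(a_{nk})$ is regular if $\lim_n\sum_k a_{nk}x_k=L$ whenever $\lim_k x_k=L$. For a nonnegative regular $A$, a real sequence $(x_k)$ is $A$-statistically convergent to $L$, written $st_A\text{-}\lim x=L$, if for every $\varepsilon>0$, $\lim_n\sum_{k:|x_k-L|\ge\varepsilon}a_{nk}=0$.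 *)

(* Defs.v *)
From Stdlib Require Import Reals Lra.
From Coquelicot Require Import Coquelicot.
Open Scope R_scope.

Definition qint (q : R) (m : nat) : R := (1 - q ^ m) / (1 - q).

Fixpoint qfact (q : R) (m : nat) : R :=
  match m with
  | O => 1
  | S m' => qint q (S m') * qfact q m'
  end.

Definition qbinom (q : R) (n k : nat) : R :=
  qfact q n / (qfact q k * qfact q (n - k)).

Fixpoint qprod (q x : R) (m : nat) : R :=
  match m with
  | O => 1
  | S m' => qprod q x m' * (1 - q ^ m' * x)
  end.

Definition pnk (n k : nat) (x q : R) : R :=
  qbinom q n k * x ^ k * qprod q x (n - k).

Fixpoint vmax (n : nat) (g : nat -> R) : R :=
  match n with
  | O => g O
  | S m => Rmax (vmax m g) (g (S m))
  end.

Definition BM (n : nat) (q : R) (f : R -> R) (x : R) : R :=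
  vmax n (fun k => pnk n k x q * f (qint q k / qint q n))
  / vmax n (fun k => pnk n k x q).

Definition nonneg_matrix (a : nat -> nat -> R) : Prop :=
  forall n k, 0 <= a n k.

Definition regular (a : nat -> nat -> R) : Prop :=
  forall (x : nat -> R) (L : R), is_lim_seq x L ->
    (forall n, ex_series (fun k => a n k * x k)) /\
    is_lim_seq (fun n => Series (fun k => a n k * x k)) L.

Definition stA_lim (a : nat -> nat -> R) (x : nat -> R) (L : R) : Prop :=
  forall eps : R, 0 < eps ->
    is_lim_seq
      (fun n => Series (fun k => if Rle_dec eps (Rabs (x k - L)) then a n k else 0))
      0.

Definition cont01 (f : R -> R) : Prop :=
  forall x, 0 <= x <= 1 -> forall eps, 0 < eps -> exists delta, 0 < delta /\
    forall y, 0 <= y <= 1 -> Rabs (y - x) < delta -> Rabs (f y - f x) < eps.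

(* sup_{x in [0,1]} |g x| (as a real; finite in the case of interest) *)
Definition sup01 (g : R -> R) : R :=
  real (Lub_Rbar (fun y => exists x, 0 <= x <= 1 /\ y = Rabs (g x))).

(* Main.v *)
Require Import Defs.
From Stdlib Require Import Reals Lra Lia Psatz.
From Coquelicot Require Import Coquelicot.
Open Scope R_scope.

Section Q.
Variable q : R.
Hypothesis Hq : 0 < q < 1.

Lemma qpow_pos k : 0 < q ^ k.
Proof. apply pow_lt; lra. Qed.

Lemma qpow_le1 k : q ^ k <= 1.
Proof. rewrite <- (pow1 k). apply pow_incr; lra. Qed.

Lemma qpow_anti i n : (i <= n)%nat -> q ^ n <= q ^ i.
Proof.
  intros H. replace n with (i + (n - i))%nat by lia. rewrite pow_add.
  pose proof (qpow_pos i). pose proof (qpow_le1 (n - i)).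
  pose proof (qpow_pos (n-i)). nra.
Qed.

Lemma qint_add i j : qint q (i + j) = qint q i + q ^ i * qint q j.
Proof. unfold qint. rewrite pow_add. field. lra. Qed.

Lemma qint_S m : qint q (S m) = qint q m + q ^ m.
Proof. replace (S m) with (m + 1)%nat by lia. rewrite qint_add.
  unfold qint at 2. simpl. field. lra. Qed.

Lemma qint_0 : qint q 0 = 0.
Proof. unfold qint. simpl. field. lra. Qed.

Lemma qint_nonneg m : 0 <= qint q m.
Proof. induction m. rewrite qint_0; lra. rewrite qint_S. pose proof (qpow_pos m). lra. Qed.

Lemma qint_le m : qint q m <= INR m.
Proof. induction m. rewrite qint_0; simpl; lra. rewrite qint_S, S_INR. pose proof (qpow_le1 m). lra. Qed.

Lemma qint_1 : qint q 1 = 1.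
Proof. unfold qint. simpl. field. lra. Qed.

Lemma qint_ge1 m : (1 <= m)%nat -> 1 <= qint q m.
Proof. intros H. replace m with (1 + (m - 1))%nat by lia. rewrite qint_add, qint_1.
  pose proof (qint_nonneg (m-1)). simpl. nra. Qed.

Lemma qint_pos m : (1 <= m)%nat -> 0 < qint q m.
Proof. intros H; pose proof (qint_ge1 m H); lra. Qed.

Lemma qint_mono i n : (i <= n)%nat -> qint q i <= qint q n.
Proof. intros H. replace n with (i + (n - i))%nat by lia. rewrite qint_add.
  pose proof (qpow_pos i). pose proof (qint_nonneg (n-i)). nra. Qed.

Lemma qfact_pos m : 0 < qfact q m.
Proof. induction m; simpl. lra. pose proof (qint_pos (S m)). apply Rmult_lt_0_compat; auto; apply H; lia. Qed.

Lemma qprod_nonneg x m : 0 <= x <= 1 -> 0 <= qprod q x m.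
Proof. intros Hx. induction m; simpl. lra. pose proof (qpow_le1 m). pose proof (qpow_pos m).
  apply Rmult_le_pos; auto. nra. Qed.

Lemma qprod_pos x m : 0 <= x < 1 -> 0 < qprod q x m.
Proof. intros Hx. induction m; simpl. lra. pose proof (qpow_le1 m). pose proof (qpow_pos m).
  apply Rmult_lt_0_compat; auto. nra. Qed.

Lemma pnk_nonneg n k x : 0 <= x <= 1 -> 0 <= pnk n k x q.
Proof. intros Hx. unfold pnk, qbinom. pose proof (qfact_pos n). pose proof (qfact_pos k).
  pose proof (qfact_pos (n-k)). apply Rmult_le_pos. apply Rmult_le_pos.
  apply Rlt_le, Rdiv_lt_0_compat; auto. apply Rmult_lt_0_compat; auto.
  apply pow_le; lra. apply qprod_nonneg; auto. Qed.

Lemma pnk_ratio i m x : pnk (S i + m) (S i) x q * (1 - q ^ m * x) * qint q (S i)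
  = pnk (S i + m) i x q * x * qint q (S m).
Proof.
  unfold pnk, qbinom. replace (S i + m - S i)%nat with m by lia.
  replace (S i + m - i)%nat with (S m) by lia.
  change (qfact q (S i)) with (qint q (S i) * qfact q i).
  change (qfact q (S m)) with (qint q (S m) * qfact q m).
  change (qprod q x (S m)) with (qprod q x m * (1 - q ^ m * x)).
  pose proof (qfact_pos i). pose proof (qfact_pos m).
  assert (0 < qint q (S i)) by (apply qint_pos; lia).
  assert (0 < qint q (S m)) by (apply qint_pos; lia).
  simpl pow. field. repeat split; lra.
Qed.

Lemma pnk_0 n x : 0 <= x < 1 -> 0 < pnk n 0 x q.
Proof. intros Hx. unfold pnk, qbinom. replace (n - 0)%nat with n by lia. simpl.
  pose proof (qfact_pos n). pose proof (qprod_pos x n Hx).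
  replace (qfact q n / (1 * qfact q n) * 1) with 1 by (field; lra). lra. Qed.

Lemma pnk_n n : pnk n n 1 q = 1.
Proof. unfold pnk, qbinom. replace (n - n)%nat with 0%nat by lia. simpl.
  pose proof (qfact_pos n). rewrite pow1. field. lra. Qed.

End Q.

Section RS.
Variables (q x eta delta : R) (i m : nat).
Hypotheses (Hq : 0 < q < 1) (Heta : 0 < eta <= 1) (Hdel : 0 < delta <= eta / 4)
  (Hqn : 1 - delta <= q ^ (S i + m)) (Hx : 0 <= x <= 1).

Lemma ratio_up :
  x + eta / 2 <= qint q i / qint q (S i + m) ->
  pnk (S i + m) (S i) x q <= / (1 + eta / 2) * pnk (S i + m) i x q.
Proof.
  intros Ht.
  set (n := (S i + m)%nat) in *.
  assert (Hb : 0 < qint q n) by (apply qint_pos; auto; unfold n; lia).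
  assert (Hbac : qint q n = qint q i + q ^ i * qint q (S m)).
  { unfold n. replace (S i + m)%nat with (i + S m)%nat by lia. apply qint_add; auto. }
  assert (Hqi : 1 - delta <= q ^ i) by (pose proof (qpow_anti q Hq i n ltac:(unfold n; lia)); lra).
  set (a := qint q i) in *. set (b := qint q n) in *. set (c := qint q (S m)) in *.
  assert (Ha : 0 <= a) by (apply qint_nonneg; auto).
  assert (Hc : 0 <= c) by (apply qint_nonneg; auto).
  assert (Hab : a <= b) by (unfold a, b; apply qint_mono; auto; unfold n; lia).
  assert (Hxb : b * (x + eta/2) <= a).
  { apply (Rmult_le_compat_l b) in Ht; [|lra]. unfold Rdiv in Ht.
    rewrite <- Rmult_assoc, (Rmult_comm b a), Rmult_assoc, Rinv_r, Rmult_1_r in Ht; lra. }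
  assert (Hx1 : x < 1) by nra.
  assert (HA1 : a <= qint q (S i)) by (unfold a; rewrite qint_S; auto; pose proof (qpow_pos q Hq i); lra).
  assert (HA1p : 0 < qint q (S i)) by (apply qint_pos; auto; lia).
  pose proof (qpow_le1 q Hq m) as Hqm1. pose proof (qpow_pos q Hq m) as Hqm0.
  assert (Hs1 : x * (b - a) <= b / 4).
  { assert (Hxb' : x * b <= a) by nra.
    assert (x * (b - a) * b <= a * (b - a)).
    { replace (x * (b - a) * b) with ((x * b) * (b - a)) by ring.
      apply Rmult_le_compat_r; lra. }
    assert (a * (b - a) <= b * b / 4) by (pose proof (pow2_ge_0 (b - 2*a)); nra).
    apply Rmult_le_reg_r with b; lra. }
  assert (Hs1' : x * (b - a) * (1 + eta) <= (1 - x) * a).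
  { assert (eta * (x * (b - a)) <= eta * (b / 4)) by (apply Rmult_le_compat_l; lra).
    nra. }
  assert (Hs2 : c * (1 - delta) <= b - a).
  { rewrite Hbac. replace (a + q ^ i * c - a) with (c * q ^ i) by ring.
    apply Rmult_le_compat_l; lra. }
  assert (Hs3a : 1 + eta/2 <= (1 + eta) * (1 - delta)) by nra.
  assert (Hs3 : x * c * (1 + eta/2) * (1 - delta) <= (1 - x) * a * (1 - delta)).
  { assert (x * c * (1 - delta) <= x * (b - a)) by nra.
    assert (x * (b - a) * (1 + eta/2) <= x * (b - a) * (1 + eta) * (1 - delta)).
    { assert (0 <= x * (b - a)) by nra. nra. }
    nra. }
  assert (Hs3' : x * c * (1 + eta/2) <= (1 - x) * a).
  { apply Rmult_le_reg_r with (1 - delta). lra. lra. }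
  assert (Hs4 : (1 - x) * a <= (1 - q ^ m * x) * qint q (S i)).
  { apply Rmult_le_compat; try lra. assert (q ^ m * x <= 1 * x) by (apply Rmult_le_compat_r; lra). lra. }
  pose proof (pnk_ratio q Hq i m x) as Hid. fold n in Hid.
  pose proof (pnk_nonneg q Hq n i x Hx) as HP0.
  pose proof (pnk_nonneg q Hq n (S i) x Hx) as HP1.
  set (P0 := pnk n i x q) in *. set (P1 := pnk n (S i) x q) in *.
  assert (HD : 0 < (1 - q ^ m * x) * qint q (S i)) by (apply Rmult_lt_0_compat; nra).
  assert (P1 * (1 + eta/2) <= P0).
  { apply Rmult_le_reg_r with ((1 - q ^ m * x) * qint q (S i)); auto.
    replace (P1 * (1 + eta/2) * ((1 - q ^ m * x) * qint q (S i))) with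
      ((P1 * (1 - q ^ m * x) * qint q (S i)) * (1 + eta/2)) by ring.
    rewrite Hid. fold c. nra. }
  apply Rmult_le_reg_l with (1 + eta/2). lra.
  rewrite <- Rmult_assoc, Rinv_r; lra.
Qed.

Lemma ratio_down :
  qint q (S i) / qint q (S i + m) <= x - eta / 2 ->
  pnk (S i + m) i x q <= / (1 + eta / 2) * pnk (S i + m) (S i) x q.
Proof.
  intros Ht.
  set (n := (S i + m)%nat) in *.
  assert (Hb : 0 < qint q n) by (apply qint_pos; auto; unfold n; lia).
  assert (Hbac : qint q n = qint q (S i) + q ^ (S i) * qint q m).
  { unfold n. apply qint_add; auto. }
  assert (Hqm : 1 - delta <= q ^ m) by (pose proof (qpow_anti q Hq m n ltac:(unfold n; lia)); lra).
  assert (Hcd : qint q (S m) = qint q m + q ^ m) by (apply qint_S; auto).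
  set (a := qint q (S i)) in *. set (b := qint q n) in *. set (c := qint q (S m)) in *.
  set (d := qint q m) in *.
  assert (Ha : 0 <= a) by (apply qint_nonneg; auto).
  assert (Hd : 0 <= d) by (apply qint_nonneg; auto).
  pose proof (qpow_le1 q Hq m) as Hqm1. pose proof (qpow_pos q Hq m) as Hqm0.
  pose proof (qpow_le1 q Hq (S i)) as Hqi1. pose proof (qpow_pos q Hq (S i)) as Hqi0.
  assert (Hbd : b - a <= d) by nra.
  assert (Hxb : a <= b * (x - eta/2)).
  { apply (Rmult_le_compat_l b) in Ht; [|lra]. unfold Rdiv in Ht.
    rewrite <- Rmult_assoc, (Rmult_comm b a), Rmult_assoc, Rinv_r, Rmult_1_r in Ht; lra. }
  assert (Hxp : eta / 2 <= x) by nra.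
  assert (Hk1 : 1 - q ^ m * x <= 1 - x + delta) by nra.
  assert (Hk2 : (1 - x) * a <= b / 4).
  { assert ((1 - x) * a <= (1 - x) * (b * x)) by (apply Rmult_le_compat_l; nra).
    assert (x * (1 - x) <= 1/4) by (pose proof (pow2_ge_0 (1 - 2*x)); nra).
    assert (b * (x * (1 - x)) <= b * (1/4)) by (apply Rmult_le_compat_l; lra).
    nra. }
  assert (Hk3 : delta * a * (1 + eta/2) <= 3 * eta * b / 8).
  { assert (a <= b) by nra. assert (delta * (1 + eta/2) <= 3 * eta / 8) by nra. nra. }
  assert (Hk4 : (1 - x + delta) * a * (1 + eta/2) <= x * (b - a)) by nra.
  assert (Hkey : (1 - q ^ m * x) * a * (1 + eta/2) <= x * c).
  { assert ((1 - q ^ m * x) * a * (1 + eta/2) <= (1 - x + delta) * a * (1 + eta/2)).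
    { apply Rmult_le_compat_r. lra. apply Rmult_le_compat_r; lra. }
    assert (x * (b - a) <= x * c) by nra. lra. }
  pose proof (pnk_ratio q Hq i m x) as Hid. fold n in Hid.
  pose proof (pnk_nonneg q Hq n i x Hx) as HP0.
  pose proof (pnk_nonneg q Hq n (S i) x Hx) as HP1.
  set (P0 := pnk n i x q) in *. set (P1 := pnk n (S i) x q) in *.
  assert (Hc : 0 < c) by (unfold c; apply qint_pos; auto; lia).
  assert (HD : 0 < x * c) by nra.
  assert (P0 * (1 + eta/2) <= P1).
  { apply Rmult_le_reg_r with (x * c); auto.
    replace (P0 * (1 + eta/2) * (x * c)) with ((P0 * x * c) * (1 + eta/2)) by ring.
    fold c in Hid. rewrite <- Hid. fold a. nra. }
  apply Rmult_le_reg_l with (1 + eta/2). lra.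
  rewrite <- Rmult_assoc, Rinv_r; lra.
Qed.
End RS.

Lemma le_div_l c a b : 0 < b -> (c <= a / b <-> c * b <= a).
Proof. intros Hb. split; intros H.
  apply (Rmult_le_compat_r b) in H; [|lra]. unfold Rdiv in H.
  rewrite Rmult_assoc, Rinv_l, Rmult_1_r in H; lra.
  apply Rmult_le_reg_r with b; auto. unfold Rdiv. rewrite Rmult_assoc, Rinv_l; lra. Qed.

Lemma le_div_r c a b : 0 < b -> (a / b <= c <-> a <= c * b).
Proof. intros Hb. split; intros H.
  apply (Rmult_le_compat_r b) in H; [|lra]. unfold Rdiv in H.
  rewrite Rmult_assoc, Rinv_l, Rmult_1_r in H; lra.
  apply Rmult_le_reg_r with b; auto. unfold Rdiv. rewrite Rmult_assoc, Rinv_l; lra. Qed.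

Section C.
Variables (q x eta delta : R) (n : nat).
Hypotheses (Hq : 0 < q < 1) (Heta : 0 < eta <= 1) (Hdel : 0 < delta <= eta / 4)
  (Hqn : 1 - delta <= q ^ n) (Hx : 0 <= x <= 1).

Let P k := pnk n k x q.
Let t k := qint q k / qint q n.
Let rho := / (1 + eta / 2).

Lemma rho_pos : 0 < rho.
Proof. unfold rho. apply Rinv_0_lt_compat. lra. Qed.

Lemma step_up i : (i < n)%nat -> x + eta / 2 <= t i -> P (S i) <= rho * P i.
Proof.
  intros Hi Ht. unfold P, t, rho in *.
  destruct (Nat.le_exists_sub (S i) n Hi) as [m [Hm _]].
  replace n with (S i + m)%nat in * by lia.
  apply ratio_up with delta; auto.
Qed.

Lemma step_down i : (i < n)%nat -> t (S i) <= x - eta / 2 -> P i <= rho * P (S i).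
Proof.
  intros Hi Ht. unfold P, t, rho in *.
  destruct (Nat.le_exists_sub (S i) n Hi) as [m [Hm _]].
  replace n with (S i + m)%nat in * by lia.
  apply ratio_down with delta; auto.
Qed.

Lemma n_pos : (1 <= n)%nat -> 0 < qint q n.
Proof. intros; apply qint_pos; auto. Qed.

Lemma t_mono i j : (1 <= n)%nat -> (i <= j)%nat -> t i <= t j.
Proof. intros Hn H. unfold t, Rdiv. apply Rmult_le_compat_r.
  left; apply Rinv_0_lt_compat, n_pos; auto. apply qint_mono; auto. Qed.

Lemma chain_up (Hn : (1 <= n)%nat) j : forall i, (i + j <= n)%nat -> x + eta / 2 <= t i ->
  P (i + j)%nat <= rho ^ j * P i.
Proof.
  induction j; intros i Hij Ht.
  - replace (i + 0)%nat with i by lia. simpl. lra.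
  - replace (i + S j)%nat with (S (i + j)) by lia.
    pose proof (IHj i ltac:(lia) Ht).
    assert (P (S (i + j)) <= rho * P (i + j)%nat).
    { apply step_up. lia. pose proof (t_mono i (i + j) Hn ltac:(lia)). lra. }
    pose proof rho_pos.
    simpl. assert (rho * P (i + j)%nat <= rho * (rho ^ j * P i)) by (apply Rmult_le_compat_l; lra).
    lra.
Qed.

Lemma chain_down (Hn : (1 <= n)%nat) j : forall i, (i + j <= n)%nat -> t (i + j)%nat <= x - eta / 2 ->
  P i <= rho ^ j * P (i + j)%nat.
Proof.
  induction j; intros i Hij Ht.
  - replace (i + 0)%nat with i by lia. simpl. lra.
  - replace (i + S j)%nat with (S i + j)%nat in * by lia.
    pose proof (IHj (S i) ltac:(lia) Ht).
    assert (P i <= rho * P (S i)).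
    { apply step_down. lia. pose proof (t_mono (S i) (S i + j) Hn ltac:(lia)). lra. }
    pose proof rho_pos.
    change (rho ^ S j) with (rho * rho ^ j). assert (rho * P (S i) <= rho * (rho ^ j * P (S i + j)%nat)) by (apply Rmult_le_compat_l; lra).
    lra.
Qed.

Variable M0 : nat.
Hypotheses (HM0 : INR M0 * delta <= eta / 2) (Hn1 : (1 <= n)%nat) (Hqi : / qint q n < delta).

Lemma big_n : INR M0 <= eta / 2 * qint q n.
Proof.
  pose proof (n_pos Hn1) as Hb.
  assert (1 < delta * qint q n).
  { apply (Rmult_lt_compat_r (qint q n)) in Hqi; auto. rewrite Rinv_l in Hqi; lra. }
  pose proof (pos_INR M0).
  assert (INR M0 * 1 <= INR M0 * (delta * qint q n)) by (apply Rmult_le_compat_l; lra).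
  assert (INR M0 * delta * qint q n <= eta / 2 * qint q n) by (apply Rmult_le_compat_r; lra).
  nra.
Qed.

Lemma far_up k : (k <= n)%nat -> x + eta <= t k -> exists k', (k' <= n)%nat /\ P k <= rho ^ M0 * P k'.
Proof.
  intros Hk Ht. pose proof (n_pos Hn1) as Hb. pose proof big_n as HB.
  unfold t in Ht. apply le_div_l in Ht; auto.
  pose proof (qint_le q Hq k).
  assert (HM : (M0 <= k)%nat).
  { apply INR_le. assert (eta * qint q n <= qint q k) by nra. nra. }
  exists (k - M0)%nat. split. lia.
  replace k with ((k - M0) + M0)%nat at 1 by lia.
  apply chain_up; auto. lia.
  unfold t. apply le_div_l; auto.
  pose proof (qint_add q Hq (k - M0) M0) as E. replace (k - M0 + M0)%nat with k in E by lia.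
  pose proof (qint_le q Hq M0). pose proof (qpow_le1 q Hq (k - M0)). pose proof (qpow_pos q Hq (k-M0)).
  pose proof (qint_nonneg q Hq M0).
  assert (q ^ (k - M0) * qint q M0 <= 1 * qint q M0) by (apply Rmult_le_compat_r; lra).
  nra.
Qed.

Lemma far_down k : (k <= n)%nat -> t k <= x - eta -> exists k', (k' <= n)%nat /\ P k <= rho ^ M0 * P k'.
Proof.
  intros Hk Ht. pose proof (n_pos Hn1) as Hb. pose proof big_n as HB.
  unfold t in Ht. apply le_div_r in Ht; auto.
  pose proof (qint_add q Hq k (n - k)) as E. replace (k + (n - k))%nat with n in E by lia.
  pose proof (qint_le q Hq (n - k)). pose proof (qpow_le1 q Hq k). pose proof (qpow_pos q Hq k).
  pose proof (qint_nonneg q Hq (n - k)).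
  assert (q ^ k * qint q (n - k) <= 1 * qint q (n - k)) by (apply Rmult_le_compat_r; lra).
  assert (HM : (M0 <= n - k)%nat).
  { apply INR_le. nra. }
  exists (k + M0)%nat. split. lia.
  apply chain_down; auto. lia.
  unfold t. apply le_div_r; auto.
  pose proof (qint_add q Hq k M0) as E2.
  pose proof (qint_le q Hq M0).
  pose proof (qint_nonneg q Hq M0).
  assert (q ^ k * qint q M0 <= 1 * qint q M0) by (apply Rmult_le_compat_r; lra).
  nra.
Qed.

End C.

Lemma vmax_ge n g k : (k <= n)%nat -> g k <= vmax n g.
Proof.
  induction n; intros Hk; simpl.
  - replace k with 0%nat by lia. lra.
  - destruct (Nat.eq_dec k (S n)). subst. apply Rmax_r.
    eapply Rle_trans. apply IHn; lia. apply Rmax_l.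
Qed.

Lemma vmax_att n g : exists k, (k <= n)%nat /\ vmax n g = g k.
Proof.
  induction n; simpl.
  - exists 0%nat; split; auto.
  - destruct IHn as [k [Hk E]]. unfold Rmax. destruct (Rle_dec (vmax n g) (g (S n))).
    exists (S n); split; auto. exists k; split; auto.
Qed.

Definition clamp y := Rmax 0 (Rmin 1 y).

Lemma clamp_id c : 0 <= c <= 1 -> clamp c = c.
Proof. intros; unfold clamp, Rmax, Rmin; repeat destruct Rle_dec; lra. Qed.

Lemma clamp_in y : 0 <= clamp y <= 1.
Proof. unfold clamp, Rmax, Rmin; repeat destruct Rle_dec; lra. Qed.

Lemma clamp_dist y c : 0 <= c <= 1 -> Rabs (clamp y - c) <= Rabs (y - c).
Proof. intros; unfold clamp, Rmax, Rmin; repeat destruct Rle_dec; unfold Rabs;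
  repeat destruct Rcase_abs; lra. Qed.

Lemma cont_clamp f : cont01 f -> forall c, 0 <= c <= 1 -> continuity_pt (fun y => f (clamp y)) c.
Proof.
  intros Hf c Hc. unfold continuity_pt, continue_in, limit1_in, limit_in. simpl. unfold Rdist.
  intros eps He. destruct (Hf c Hc eps He) as [d [Hd Hd']]. exists d. split; auto.
  intros y [_ Hy]. rewrite (clamp_id c Hc). apply Hd'. apply clamp_in.
  pose proof (clamp_dist y c Hc). lra.
Qed.

Lemma approx f : (forall x, 0 <= x <= 1 -> 0 <= f x) -> cont01 f ->
  forall eps, 0 < eps -> exists delta, 0 < delta /\
  forall n q, (1 <= n)%nat -> 0 < q < 1 -> 1 - delta < q ^ n -> / qint q n < delta ->
  forall x, 0 <= x <= 1 -> Rabs (BM n q f x - f x) <= eps.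
Proof.
  intros Hfp Hf eps He.
  set (g := fun y => f (clamp y)).
  assert (Hg : forall c, 0 <= c <= 1 -> continuity_pt g c) by (apply cont_clamp; auto).
  assert (Hgf : forall y, 0 <= y <= 1 -> g y = f y) by (intros; unfold g; rewrite clamp_id; auto).
  destruct (continuity_ab_maj g 0 1 ltac:(lra) Hg) as [Mx [HMx HMx01]].
  set (M := g Mx + 1).
  assert (HMpos : 1 <= M) by (unfold M; rewrite Hgf; auto; pose proof (Hfp Mx HMx01); lra).
  assert (HfM : forall y, 0 <= y <= 1 -> 0 <= f y <= M).
  { intros y Hy. split. auto. rewrite <- Hgf; auto. pose proof (HMx y Hy). unfold M; lra. }
  destruct (Heine g (fun c => 0 <= c <= 1) (compact_P3 0 1) Hg (mkposreal eps He)) as [d0 Hd0].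
  simpl in Hd0.
  set (eta := Rmin d0 1).
  assert (Heta : 0 < eta <= 1) by (unfold eta; pose proof (cond_pos d0); unfold Rmin; destruct Rle_dec; lra).
  assert (Hetad : eta <= d0) by (unfold eta; apply Rmin_l).
  set (theta := Rmin (eps / M) (1/2)).
  assert (Hth : 0 < theta) by (unfold theta; unfold Rmin; destruct Rle_dec; try lra; apply Rdiv_lt_0_compat; lra).
  assert (Hth2 : theta <= 1/2) by apply Rmin_r.
  assert (Hth3 : theta * M <= eps).
  { assert (theta <= eps / M) by apply Rmin_l. apply le_div_l in H; lra. }
  set (rho := / (1 + eta / 2)).
  assert (Hrho : 0 < rho < 1).
  { unfold rho. split. apply Rinv_0_lt_compat; lra. rewrite <- Rinv_1. apply Rinv_lt_contravar; lra. }
  destruct (pow_lt_1_zero rho ltac:(rewrite Rabs_pos_eq; lra) theta Hth) as [M0 HM0].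
  specialize (HM0 M0 (le_n _)). rewrite Rabs_pos_eq in HM0 by (apply pow_le; lra).
  pose proof (pos_INR M0) as HM0p.
  set (delta := Rmin (eta / 4) (eta / (2 * (INR M0 + 1)))).
  assert (Hdel : 0 < delta <= eta / 4).
  { unfold delta. split. unfold Rmin; destruct Rle_dec. lra. apply Rdiv_lt_0_compat; lra. apply Rmin_l. }
  assert (HMd : INR M0 * delta <= eta / 2).
  { assert (delta <= eta / (2 * (INR M0 + 1))) by apply Rmin_r.
    apply le_div_l in H; [|lra].
    assert (INR M0 * delta <= (INR M0 + 1) * delta) by nra. nra. }
  exists delta. split. lra.
  intros n q Hn Hq Hqn Hqi x Hx.
  set (P := fun k => pnk n k x q).
  set (t := fun k => qint q k / qint q n).
  assert (Hb : 0 < qint q n) by (apply qint_pos; auto).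
  assert (Ht01 : forall k, (k <= n)%nat -> 0 <= t k <= 1).
  { intros k Hk. unfold t. split. apply Rmult_le_pos. apply qint_nonneg; auto. left; apply Rinv_0_lt_compat; auto.
    apply le_div_r; auto. rewrite Rmult_1_l. apply qint_mono; auto. }
  assert (HP0 : forall k, 0 <= P k) by (intros; apply pnk_nonneg; auto).
  set (D := vmax n P).
  assert (HDp : 0 < D).
  { destruct (Rle_lt_dec 1 x).
    - assert (x = 1) by lra. subst x. pose proof (vmax_ge n P n (le_n _)). pose proof (pnk_n q Hq n). unfold D, P in *. lra.
    - pose proof (vmax_ge n P 0 ltac:(lia)). pose proof (pnk_0 q Hq n x ltac:(lra)). unfold D, P in *. lra. }
  assert (HPD : forall k, (k <= n)%nat -> P k <= D) by (intros; apply vmax_ge; auto).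
  assert (Hfar : forall k, (k <= n)%nat -> ~ Rabs (t k - x) < eta -> P k <= theta * D).
  { intros k Hk Hnear.
    assert (exists k', (k' <= n)%nat /\ P k <= rho ^ M0 * P k') as [k' [Hk' HPk]].
    { destruct (Rle_lt_dec (x + eta) (t k)).
      - apply (far_up q x eta delta n Hq Heta Hdel ltac:(lra) Hx M0 HMd Hn Hqi k Hk r).
      - apply (far_down q x eta delta n Hq Heta Hdel ltac:(lra) Hx M0 HMd Hn Hqi k Hk).
        change (qint q k / qint q n) with (t k).
        unfold Rabs in Hnear; destruct Rcase_abs in Hnear; lra. }
    pose proof (HPD k' Hk'). pose proof (HP0 k').
    assert (rho ^ M0 * P k' <= theta * P k') by (apply Rmult_le_compat_r; lra).
    assert (theta * P k' <= theta * D) by (apply Rmult_le_compat_l; lra). lra. }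
  assert (Hnearf : forall k, (k <= n)%nat -> Rabs (t k - x) < eta -> Rabs (f (t k) - f x) < eps).
  { intros k Hk Hn'. rewrite <- !Hgf; auto. apply Hd0; auto. lra. }
  set (N := vmax n (fun k => P k * f (t k))).
  assert (HNup : N <= (f x + eps) * D).
  { destruct (vmax_att n (fun k => P k * f (t k))) as [k [Hk E]]. unfold N. rewrite E.
    pose proof (HfM (t k) (Ht01 k Hk)). pose proof (HfM x Hx). pose proof (HPD k Hk). pose proof (HP0 k).
    destruct (Rlt_dec (Rabs (t k - x)) eta).
    - pose proof (Hnearf k Hk r). apply Rabs_def2 in H3.
      assert (P k * f (t k) <= P k * (f x + eps)) by (apply Rmult_le_compat_l; lra).
      assert (P k * (f x + eps) <= D * (f x + eps)) by (apply Rmult_le_compat_r; lra). lra.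
    - pose proof (Hfar k Hk n0).
      assert (P k * f (t k) <= P k * M) by (apply Rmult_le_compat_l; lra).
      assert (P k * M <= theta * D * M) by (apply Rmult_le_compat_r; lra).
      assert (theta * M * D <= eps * D) by (apply Rmult_le_compat_r; lra). nra. }
  assert (HNlo : (f x - eps) * D <= N).
  { destruct (vmax_att n P) as [j [Hj E]]. fold D in E.
    assert (Rabs (t j - x) < eta).
    { destruct (Rlt_dec (Rabs (t j - x)) eta); auto. pose proof (Hfar j Hj n0).
      assert (theta * D <= 1/2 * D) by (apply Rmult_le_compat_r; lra). lra. }
    pose proof (Hnearf j Hj H). apply Rabs_def2 in H0.
    pose proof (vmax_ge n (fun k => P k * f (t k)) j Hj). fold N in H1. simpl in H1.
    rewrite <- E in H1.
    assert ((f x - eps) * D <= f (t j) * D) by (apply Rmult_le_compat_r; lra). lra. }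
  assert (E : BM n q f x = N / D) by reflexivity. rewrite E.
  assert (f x - eps <= N / D) by (apply le_div_l; auto).
  assert (N / D <= f x + eps) by (apply le_div_r; auto).
  apply Rabs_le. lra.
Qed.

Lemma sup01_bound g c : 0 <= c -> (forall x, 0 <= x <= 1 -> Rabs (g x) <= c) -> 0 <= sup01 g <= c.
Proof.
  intros Hc Hg. unfold sup01.
  set (E := fun y => exists x, 0 <= x <= 1 /\ y = Rabs (g x)).
  generalize (Lub_Rbar_correct E). destruct (Lub_Rbar E) as [r| |]; intros [H1 H2].
  - assert (A : Rbar_le (Rabs (g 0)) r) by (apply H1; exists 0; split; [lra|auto]).
    assert (B : Rbar_le r c).
    { apply H2. intros y [x [Hx ->]]. simpl. apply Hg; auto. }
    simpl in *. pose proof (Rabs_pos (g 0)). lra.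
  - assert (B : Rbar_le p_infty c).
    { apply H2. intros y [x [Hx ->]]. simpl. apply Hg; auto. }
    simpl in B. contradiction.
  - assert (A : Rbar_le (Rabs (g 0)) m_infty) by (apply H1; exists 0; split; [lra|auto]).
    simpl in A. contradiction.
Qed.

Lemma ex_series_dom (b c : nat -> R) : ex_series b -> (forall k, 0 <= c k <= b k) -> ex_series c.
Proof.
  intros Hb Hc. apply (ex_series_le c b); auto.
  intros k. specialize (Hc k). unfold norm; simpl. unfold abs; simpl. rewrite Rabs_pos_eq; lra.
Qed.

Theorem theorem8 (a : nat -> nat -> R) (q : nat -> R)
  (HA0 : nonneg_matrix a) (HAreg : regular a)
  (Hq : forall n, 0 < q n < 1)
  (Hqn : stA_lim a (fun n => q n ^ n) 1)
  (Hqint : stA_lim a (fun n => / qint (q n) n) 0)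
  (f : R -> R) (Hfpos : forall x, 0 <= x <= 1 -> 0 <= f x) (Hf : cont01 f) :
  stA_lim a (fun n => sup01 (fun x => BM n (q n) f x - f x)) 0.
Proof.
  intros eps He.
  destruct (approx f Hfpos Hf (eps / 2) ltac:(lra)) as [d [Hd Happ]].
  set (e := fun k : nat => if Nat.eq_dec k 0 then 1 else 0).
  assert (He0 : is_lim_seq e 0).
  { apply is_lim_seq_incr_1. apply is_lim_seq_ext with (fun _ => 0). intros; reflexivity.
    apply is_lim_seq_const. }
  destruct (HAreg e 0 He0) as [Hex0 Hlim0].
  destruct (HAreg (fun _ => 1) 1 (is_lim_seq_const 1)) as [Hex1 _].
  pose proof (Hqn d Hd) as Hl1. pose proof (Hqint d Hd) as Hl2.
  set (u1 := fun n k => if Rle_dec d (Rabs (q k ^ k - 1)) then a n k else 0).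
  set (u2 := fun n k => if Rle_dec d (Rabs (/ qint (q k) k - 0)) then a n k else 0).
  set (v := fun n k => if Rle_dec eps (Rabs (sup01 (fun x => BM k (q k) f x - f x) - 0)) then a n k else 0).
  assert (Hu1 : forall n k, 0 <= u1 n k <= a n k * 1).
  { intros; unfold u1; destruct Rle_dec; pose proof (HA0 n k); lra. }
  assert (Hu2 : forall n k, 0 <= u2 n k <= a n k * 1).
  { intros; unfold u2; destruct Rle_dec; pose proof (HA0 n k); lra. }
  assert (Hv : forall n k, 0 <= v n k <= a n k * 1).
  { intros; unfold v; destruct Rle_dec; pose proof (HA0 n k); lra. }
  assert (He1 : forall n k, 0 <= a n k * e k <= a n k * 1).
  { intros; unfold e; destruct Nat.eq_dec; pose proof (HA0 n k); lra. }
  assert (Ex1 : forall n, ex_series (u1 n)) by (intros; apply ex_series_dom with (fun k => a n k * 1); auto).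
  assert (Ex2 : forall n, ex_series (u2 n)) by (intros; apply ex_series_dom with (fun k => a n k * 1); auto).
  assert (Hpt : forall n k, v n k <= a n k * e k + u1 n k + u2 n k).
  { intros n k. pose proof (Hu1 n k). pose proof (Hu2 n k). pose proof (He1 n k).
    unfold v. destruct Rle_dec as [Hc|Hc]; [|lra].
    destruct (Nat.eq_dec k 0) as [->|Hk0].
    - unfold e; simpl. lra.
    - unfold u1, u2. destruct (Rle_dec d (Rabs (q k ^ k - 1))) as [G1|G1].
      + pose proof (HA0 n k). destruct Rle_dec; lra.
      + destruct (Rle_dec d (Rabs (/ qint (q k) k - 0))) as [G2|G2].
        * pose proof (HA0 n k). lra.
        * exfalso.
          assert (Hb : 0 <= sup01 (fun x => BM k (q k) f x - f x) <= eps / 2).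
          { apply sup01_bound. lra. intros x Hx. apply Happ; auto. lia.
            apply Rnot_le_lt in G1. apply Rabs_def2 in G1. lra.
            apply Rnot_le_lt in G2. rewrite Rminus_0_r in G2. pose proof (Rle_abs (/ qint (q k) k)). lra. }
          rewrite Rminus_0_r, Rabs_pos_eq in Hc by lra. lra. }
  apply is_lim_seq_le_le with (fun _ => 0) (fun n => Series (fun k => a n k * e k) + Series (u1 n) + Series (u2 n)).
  - intros n. change (0 <= Series (v n) <= Series (fun k => a n k * e k) + Series (u1 n) + Series (u2 n)). split.
    + assert (Series (fun k => 0 * v n k) <= Series (v n)).
      { apply Series_le. intros k; pose proof (Hv n k); lra.
        apply ex_series_dom with (fun k => a n k * 1); auto. }
      rewrite Series_scal_l, Rmult_0_l in H. exact H.
    + assert (X1 : ex_series (fun k => a n k * e k + u1 n k)).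
      { exact (ex_series_plus (fun k => a n k * e k) (u1 n) (Hex0 n) (Ex1 n)). }
      assert (X2 : ex_series (fun k => a n k * e k + u1 n k + u2 n k)).
      { exact (ex_series_plus (fun k => a n k * e k + u1 n k) (u2 n) X1 (Ex2 n)). }
      rewrite <- (Series_plus (fun k => a n k * e k) (u1 n)) by auto.
      rewrite <- (Series_plus (fun k => a n k * e k + u1 n k) (u2 n)) by auto.
      apply Series_le; auto. intros k; pose proof (Hv n k); pose proof (Hpt n k); lra.
  - apply is_lim_seq_const.
  - replace (Finite 0) with (Finite (0 + 0 + 0)) by (f_equal; ring).
    apply is_lim_seq_plus'. apply is_lim_seq_plus'; auto. auto.
Qed.
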